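(* Let $h$ be a binary function symbol interpreted as associative and idempotent, let $a,b$ be distinct free constants, and let $x$ be a variable. Let $\mathcal{W}(x,\{a,b\})$ be the set of terms of the form $h(x,s_1,\ldots,s_n,x)$ with $n\ge 0$ and each $s_i\in\{x,a,b\}$. Then every $t\in\mathcal{W}(x,\{a,b\})$ is an $AI$-generalization of $h(a,b)$ and $h(b,a)$, i.e. $\mathcal{W}(x,\{a,b\})\subseteq \mathcal{G}_{AI}(h(a,b),h(b,a))$.
   Context: Terms are built from a countable set of variables and a set of function symbols with fixed arities; substitutions map variables to terms, are the identity on all but finitely many variables, and are extended homomorphically to terms (written postfix, $t\sigma$). $AI$ denotes the equational theory generated by $h(x,h(y,z)) = h(h(x,y),z)$ and $h(x,x)=x$ (all other symbols free), and $s\approx_{AI} t$ means $s=t$ holds in every model of these axioms. Because $h$ is associative, $h(u_1,\ldots,u_m)$ for $m\ge2$ denotes the flattened $h$-product of $u_1,\ldots,u_m$. A term $r$ is an $AI$-generalization of terms $s$ and $t$ if there exist substitutions $\sigma,\tau$ with $r\sigma\approx_{AI} s$ and $r\tau\approx_{AI} t$; $\mathcal{G}_{AI}(s,t)$ is the set of all such $r$. *)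

(* Defs.v *)
From Stdlib Require List.
From mathcomp Require Import all_boot.
Set Implicit Arguments.
Unset Strict Implicit.
Unset Printing Implicit Defensive.

Section Terms.
Variables (F : Type) (ar : F -> nat).

Unset Implicit Arguments.
Inductive term : Type :=
| Var : nat -> term
| App : forall f : F, ('I_(ar f) -> term) -> term.
Set Implicit Arguments.

Fixpoint subst (sigma : nat -> term) (t : term) : term :=
  match t with
  | Var n => sigma n
  | App f args => App f (fun i => subst sigma (args i))
  end.

Definition finite_subst (sigma : nat -> term) : Prop :=
  exists N : nat, forall n, N <= n -> sigma n = Var n.

Fixpoint eval (M : Type) (I : forall f : F, ('I_(ar f) -> M) -> M)
         (v : nat -> M) (t : term) : M :=
  match t with
  | Var n => v n
  | App f args => I f (fun i => eval I v (args i))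
  end.

Variable h : F.

Definition happ (M : Type) (I : forall f : F, ('I_(ar f) -> M) -> M) (x y : M) : M :=
  I h (fun i => if nat_of_ord i == 0 then x else y).

Definition hterm (u v : term) : term :=
  App h (fun i => if nat_of_ord i == 0 then u else v).

(* Flattened h-product h(u0,u1,...,um) (left-nested; equivalent to any
   bracketing modulo associativity). *)
Definition hprod (u0 : term) (us : seq term) : term := foldl hterm u0 us.

Definition AI_model (M : Type) (I : forall f : F, ('I_(ar f) -> M) -> M) : Prop :=
  (forall x y z : M, happ I x (happ I y z) = happ I (happ I x y) z) /\
  (forall x : M, happ I x x = x).

Definition AI_eq (s t : term) : Prop :=
  forall (M : Type) (I : forall f : F, ('I_(ar f) -> M) -> M),
    AI_model I -> forall v : nat -> M, eval I v s = eval I v t.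

Definition AI_gen (r s t : term) : Prop :=
  exists sigma tau : nat -> term,
    finite_subst sigma /\ finite_subst tau /\
    AI_eq (subst sigma r) s /\ AI_eq (subst tau r) t.

(* Constant: a symbol of arity 0 applied to no arguments (the argument
   function is irrelevant when ar c = 0; we use a dummy). *)
Definition const (c : F) : term := App c (fun _ => Var 0).

Definition W (x : nat) (a b : F) (t : term) : Prop :=
  exists s : seq term,
    (forall u, List.In u s -> u = Var x \/ u = const a \/ u = const b) /\
    t = hprod (Var x) (s ++ [:: Var x]).

End Terms.
Arguments App {F ar} f _.

(* Main.v *)
Require Import Defs.
From Stdlib Require Import FunctionalExtensionality.
From Stdlib Require List.
From mathcomp Require Import all_boot.

Section Aux.
Variables (F : Type) (ar : F -> nat) (h : F).

Lemma subst_hterm (s : nat -> @term F ar) u w :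
  subst s (hterm h u w) = hterm h (subst s u) (subst s w).
Proof.
rewrite /hterm /=; f_equal; apply: functional_extensionality => i.
by case: (_ == 0).
Qed.

Lemma eval_hterm M (I : forall f : F, ('I_(ar f) -> M) -> M) v u w :
  eval I v (hterm h u w) = happ h I (eval I v u) (eval I v w).
Proof.
rewrite /hterm /happ /=; f_equal; apply: functional_extensionality => i.
by case: (_ == 0).
Qed.

Lemma eval_subst_hprod M (I : forall f : F, ('I_(ar f) -> M) -> M) v s us u0 :
  eval I v (subst s (hprod h u0 us)) =
  foldl (happ h I) (eval I v (subst s u0)) (map (fun u => eval I v (subst s u)) us).
Proof.
elim: us u0 => [|u us IH] u0 //=.
by rewrite /hprod /= -/(hprod h _ _) IH subst_hterm eval_hterm.
Qed.

Lemma eval_const0 M (I : forall f : F, ('I_(ar f) -> M) -> M) v1 v2 c f g :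
  ar c = 0 -> eval I v1 (App c f) = eval I v2 (App c g).
Proof.
move=> Hc /=; f_equal; apply: functional_extensionality => i.
exfalso; case: i => i; by rewrite Hc.
Qed.

End Aux.

Lemma band_fold M (m : M -> M -> M)
  (As : forall x y z, m x (m y z) = m (m x y) z) (Id : forall x, m x x = x)
  p q (l : seq M) :
  (forall y, List.In y l -> y = m p q \/ y = p \/ y = q) ->
  foldl m (m p q) (l ++ [:: m p q]) = m p q.
Proof.
set E := m p q.
have EE : m E E = E by apply Id.
have Eq : m E q = E by rewrite /E -As Id.
have Epp : m (m E p) p = m E p by rewrite -As Id.
have Epq : m (m E p) q = E by rewrite -As Id.
have EpE : m (m E p) E = E.
  by rewrite /E -As [m p (m p q)]As Id Id.
move=> Hl.
suff H : forall v, v = E \/ v = m E p -> foldl m v (l ++ [:: E]) = E.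
  by apply: H; left.
elim: l Hl => [|y l IH] Hl v Hv /=.
  by case: Hv => ->.
apply: IH.
  by move=> z Hz; apply: Hl; right.
have := Hl y (or_introl erefl).
case: Hv => -> [->|[->|->]]; rewrite ?EE ?Eq ?Epp ?Epq ?EpE; tauto.
Qed.

Theorem corollary1 (F : Type) (ar : F -> nat) (h a b : F)
  (Hh : ar h = 2) (Ha : ar a = 0) (Hb : ar b = 0) (Hab : a <> b)
  (x : nat) (t : @term F ar) :
  W h x a b t ->
  AI_gen h t (hterm h (const ar a) (const ar b)) (hterm h (const ar b) (const ar a)).
Proof.
move=> [s [Hs ->]].
have key : forall c d, ar c = 0 -> ar d = 0 ->
  (forall u, List.In u s -> u = Var F ar x \/ u = const ar c \/ u = const ar d) ->
  let sg := fun n => if n == x then hterm h (const ar c) (const ar d) else Var F ar n in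
  finite_subst sg /\ AI_eq h (subst sg (hprod h (Var F ar x) (s ++ [:: Var F ar x])))
                             (hterm h (const ar c) (const ar d)).
  move=> c d Hc Hd Hs' sg; split.
    exists x.+1 => n Hn; rewrite /sg.
    by have -> : (n == x) = false by apply/eqP => E; rewrite E ltnn in Hn.
  move=> M I [As Id] v.
  rewrite [RHS]eval_hterm eval_subst_hprod map_cat /= {1 3}/sg eqxx eval_hterm.
  apply: band_fold => // y /List.in_map_iff [u [<- Hu]].
  case: (Hs' u Hu) => [->|[->|->]].
  - by left; rewrite /= /sg eqxx eval_hterm.
  - by right; left; apply: eval_const0.
  - by right; right; apply: eval_const0.
have [f1 e1] := key a b Ha Hb Hs.
have Hs2 : forall u, List.In u s -> u = Var F ar x \/ u = const ar b \/ u = const ar a.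
  by move=> u Hu; case: (Hs u Hu); tauto.
have [f2 e2] := key b a Hb Ha Hs2.
by do 2 eexists; split; [exact f1|split; [exact f2|split; [exact e1|exact e2]]].
Qed.
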